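(* Let $d>1$ be an integer. With $\mathcal{L}_d$ the vector bundle on $\mathbb{P}^5=\mathbb{P}(\wedge^2S_1)$ defined as the kernel of $\bar\tau_d\otimes 1: H^0(\mathbb{P}^3,T\mathbb{P}^3(d-1))\otimes\mathcal{O}_{\mathbb{P}^5}\to S_{d+1}\otimes\mathcal{O}_{\mathbb{P}^5}(1)$, $\varphi\otimes\omega\mapsto\omega\cdot\varphi$, let $\mathbb{P}(\mathcal{L}_d)\subset\mathbb{P}^5\times\mathbb{F}_d$ be the associated projective subbundle and $\mathbb{L}_d\subset\mathbb{F}_d$ its image under the second projection $\mathbf{p}$ (the variety of Legendrian foliations of degree $d$). Then $\mathbf{p}:\mathbb{P}(\mathcal{L}_d)\to\mathbb{L}_d$ is generically bijective; i.e. a general $\varphi\in\mathbb{L}_d$ is tangent to one and only one distribution $\omega\in\mathbb{P}^5\setminus\mathbb{G}$.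
   Context: Work over $\mathbb{C}$. Let $x_1,\dots,x_4$ be homogeneous coordinates on $\mathbb{P}^3$, $S_k$ the space of homogeneous polynomials of degree $k$ in $x_1,\dots,x_4$, $\partial_R=\sum x_i\partial_{x_i}$. The space of foliations of dimension one and degree $d$ is $\mathbb{F}_d:=\mathbb{P}(H^0(\mathbb{P}^3,T\mathbb{P}^3(d-1)))$ with $H^0(\mathbb{P}^3,T\mathbb{P}^3(d-1))=(S_d\otimes\langle\partial_{x_1},\dots,\partial_{x_4}\rangle)/(S_{d-1}\cdot\partial_R)$, elements represented by $\varphi=\sum p_i\partial_{x_i}$, $p_i\in S_d$. Points of $\mathbb{P}^5=\mathbb{P}(\wedge^2S_1)$ are degree-$0$ distributions $\omega=\sum_{i<j}\alpha_{ij}(x_jdx_i-x_idx_j)$ (antisymmetric $4\times 4$ matrices up to scalar); with $\omega=\sum a_idx_i$, set $\omega\cdot\varphi:=\sum a_ip_i\in S_{d+1}$, and $\varphi$ is tangent to $\omega$ if $\omega\cdot\varphi=0$. $\mathbb{G}\subset\mathbb{P}^5$ is the Pfaff–Plücker quadric of rank-$2$ matrices; its complement consists of contact forms (rank $4$). The kernel sheaf $\mathcal{L}_d$ is locally free on $\mathbb{P}^5$; over $\mathbb{P}^5\setminus\mathbb{G}$ its fiber at $\omega$ is $\{\varphi\mid\omega\cdot\varphi=0\}$. *)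

(* Defs.v *)
From HB Require Import structures.
From mathcomp Require Import all_boot all_order all_algebra.
From mathcomp Require Import mpoly.
From mathcomp Require Import complex.
From mathcomp Require Import reals.

Set Implicit Arguments.
Unset Strict Implicit.
Unset Printing Implicit Defensive.

Import Order.TTheory GRing.Theory Num.Theory.
Local Open Scope ring_scope.

Definition CC (R : realType) := complex R.

Definition mon (d : nat) := {m : 'X_{1..4 < d.+1} | mdeg (val m) == d}.

(* Index set of the coordinates of S_d (x) <d/dx_1,...,d/dx_4>. *)
Definition Jd (d : nat) := ('I_4 * mon d)%type.

(* A vector field phi = sum_i p_i d/dx_i with p_i in S_d, given by its
   coefficients: c (i, m) is the coefficient of x^m in p_i. *)
Definition vfield (R : realType) (d : nat) := Jd d -> CC R.

Definition pcomp (R : realType) (d : nat) (c : vfield R d) (i : 'I_4)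
  : {mpoly CC R [4]} :=
  \sum_(m : mon d) c (i, m) *: 'X_[val (val m)].

(* A degree-0 distribution omega = sum_{i<j} a_ij (x_j dx_i - x_i dx_j) is
   encoded by the antisymmetric 4x4 matrix A (A i j = a_ij for i<j);
   then omega = sum_i a_i dx_i with a_i = sum_j A i j x_j. *)
Definition antisym (R : realType) (A : 'M[CC R]_4) : Prop := A^T = - A.

Definition dcoef (R : realType) (A : 'M[CC R]_4) (i : 'I_4)
  : {mpoly CC R [4]} := \sum_(j < 4) A i j *: 'X_j.

Definition contract (R : realType) (d : nat) (A : 'M[CC R]_4)
  (c : vfield R d) : {mpoly CC R [4]} :=
  \sum_(i < 4) dcoef A i * pcomp c i.

Definition tangent (R : realType) (d : nat) (A : 'M[CC R]_4)
  (c : vfield R d) : Prop := contract A c = 0.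

(* omega is a contact form: a point of P^5 \ G (antisymmetric of rank 4) *)
Definition contact (R : realType) (A : 'M[CC R]_4) : Prop :=
  antisym A /\ \rank A = 4%N.

(* phi lies in S_{d-1} . partial_R, i.e. represents 0 in H^0(TP^3(d-1)) *)
Definition radial (R : realType) (d : nat) (c : vfield R d) : Prop :=
  exists g : {mpoly CC R [4]},
    g \is (d.-1).-homog /\ forall i : 'I_4, pcomp c i = g * 'X_i.

Definition peval (R : realType) (d : nat)
  (f : {mpoly CC R [#|{: Jd d}|]}) (c : vfield R d) : CC R :=
  meval (fun k => c (enum_val k)) f.

Definition zclosure (R : realType) (d : nat) (S : vfield R d -> Prop)
  (c : vfield R d) : Prop :=
  forall f : {mpoly CC R [#|{: Jd d}|]},
    (forall c', S c' -> peval f c' = 0) -> peval f c = 0.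

Definition legendrian_pt (R : realType) (d : nat) (c : vfield R d) : Prop :=
  exists A, contact A /\ tangent A c.

(* Affine cone over L_d (= p(P(L_d)) = closure of the Legendrian points) *)
Definition Lcone (R : realType) (d : nat) (c : vfield R d) : Prop :=
  zclosure (@legendrian_pt R d) c.

(* Main.v *)
Require Import Defs.
From HB Require Import structures.
From mathcomp Require Import all_boot all_order all_algebra.
From mathcomp Require Import mpoly.
From mathcomp Require Import complex.
From mathcomp Require Import reals.
From mathcomp Require Import ring zify.
Set Implicit Arguments.
Unset Strict Implicit.
Unset Printing Implicit Defensive.
Import GRing.Theory Num.Theory.
Local Open Scope ring_scope.

Definition ispoly (R : realType) (d : nat) (F : vfield R d -> CC R) :=
  exists f : {mpoly CC R [#|{: Jd d}|]}, forall c, peval f c = F c.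

Lemma ispoly_ext (R : realType) (d : nat) (F G : vfield R d -> CC R) :
  (forall c, F c = G c) -> ispoly F -> ispoly G.
Proof. by move=> e [f hf]; exists f => c; rewrite hf e. Qed.

Lemma ispolyC (R : realType) (d : nat) (a : CC R) : ispoly (fun _ : vfield R d => a).
Proof. by exists a%:MP => c; rewrite /peval mevalC. Qed.

Lemma ispolyV (R : realType) (d : nat) (J : Jd d) : ispoly (fun c : vfield R d => c J).
Proof. by exists 'X_(enum_rank J) => c; rewrite /peval mevalXU enum_rankK. Qed.

Lemma ispolyD (R : realType) (d : nat) (F G : vfield R d -> CC R) :
  ispoly F -> ispoly G -> ispoly (fun c => F c + G c).
Proof. by move=> [f hf] [g hg]; exists (f + g) => c; rewrite /peval mevalD -!/(peval _ _) hf hg. Qed.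

Lemma ispolyM (R : realType) (d : nat) (F G : vfield R d -> CC R) :
  ispoly F -> ispoly G -> ispoly (fun c => F c * G c).
Proof. by move=> [f hf] [g hg]; exists (f * g) => c; rewrite /peval mevalM -!/(peval _ _) hf hg. Qed.

Lemma ispolyN (R : realType) (d : nat) (F : vfield R d -> CC R) :
  ispoly F -> ispoly (fun c => - F c).
Proof. by move=> [f hf]; exists (- f) => c; rewrite /peval mevalN -!/(peval _ _) hf. Qed.

Lemma ispolyB (R : realType) (d : nat) (F G : vfield R d -> CC R) :
  ispoly F -> ispoly G -> ispoly (fun c => F c - G c).
Proof. by move=> hF hG; apply: ispolyD => //; apply: ispolyN. Qed.

Lemma ispoly_sum (R : realType) (d : nat) (I : Type) (r : seq I) (P : pred I)
  (F : I -> vfield R d -> CC R) :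
  (forall i, ispoly (F i)) -> ispoly (fun c => \sum_(i <- r | P i) F i c).
Proof.
move=> h; elim: r => [|x r IH].
  by apply: ispoly_ext (ispolyC _ 0) => c; rewrite big_nil.
case Px: (P x).
  by apply: ispoly_ext (ispolyD (h x) IH) => c; rewrite big_cons Px.
by apply: ispoly_ext IH => c; rewrite big_cons Px.
Qed.

Lemma ispoly_prod (R : realType) (d : nat) (I : Type) (r : seq I) (P : pred I)
  (F : I -> vfield R d -> CC R) :
  (forall i, ispoly (F i)) -> ispoly (fun c => \prod_(i <- r | P i) F i c).
Proof.
move=> h; elim: r => [|x r IH].
  by apply: ispoly_ext (ispolyC _ 1) => c; rewrite big_nil.
case Px: (P x).
  by apply: ispoly_ext (ispolyM (h x) IH) => c; rewrite big_cons Px.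
by apply: ispoly_ext IH => c; rewrite big_cons Px.
Qed.

Lemma ispoly_det (R : realType) (d : nat) (n : nat) (M : vfield R d -> 'M[CC R]_n) :
  (forall i j, ispoly (fun c => M c i j)) -> ispoly (fun c => \det (M c)).
Proof.
move=> h; rewrite /determinant.
apply: ispoly_sum => s; apply: ispolyM; first exact: ispolyC.
by apply: ispoly_prod => i; apply: h.
Qed.


Definition o0 : 'I_4 := @Ordinal 4 0 isT.
Definition o1 : 'I_4 := @Ordinal 4 1 isT.
Definition o2 : 'I_4 := @Ordinal 4 2 isT.
Definition o3 : 'I_4 := @Ordinal 4 3 isT.
Definition q0 : 'I_6 := @Ordinal 6 0 isT.
Definition q1 : 'I_6 := @Ordinal 6 1 isT.
Definition q2 : 'I_6 := @Ordinal 6 2 isT.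
Definition q3 : 'I_6 := @Ordinal 6 3 isT.
Definition q4 : 'I_6 := @Ordinal 6 4 isT.
Definition q5 : 'I_6 := @Ordinal 6 5 isT.

Lemma ord4P (i : 'I_4) : [\/ i = o0, i = o1, i = o2 | i = o3].
Proof.
case: i => [[|[|[|[|k]]]] hk].
- by apply: Or41; apply: val_inj.
- by apply: Or42; apply: val_inj.
- by apply: Or43; apply: val_inj.
- by apply: Or44; apply: val_inj.
- by [].
Qed.

Lemma ord6P (i : 'I_6) : i = q0 \/ i = q1 \/ i = q2 \/ i = q3 \/ i = q4 \/ i = q5.
Proof.
case: i => [[|[|[|[|[|[|k]]]]]] hk].
- by left; apply: val_inj.
- by right; left; apply: val_inj.
- by right; right; left; apply: val_inj.
- by right; right; right; left; apply: val_inj.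
- by right; right; right; right; left; apply: val_inj.
- by right; right; right; right; right; apply: val_inj.
- by [].
Qed.

Lemma sum4 (V : nmodType) (F : 'I_4 -> V) : \sum_(i < 4) F i = F o0 + F o1 + F o2 + F o3.
Proof.
rewrite !big_ord_recl big_ord0 addr0 !addrA.
by congr (_ + _ + _ + _); congr F; apply: val_inj.
Qed.

Lemma sum6 (V : nmodType) (F : 'I_6 -> V) :
  \sum_(i < 6) F i = F q0 + F q1 + F q2 + F q3 + F q4 + F q5.
Proof.
rewrite !big_ord_recl big_ord0 addr0 !addrA.
by congr (_ + _ + _ + _ + _ + _); congr F; apply: val_inj.
Qed.

Definition pI (k : 'I_6) : 'I_4 :=
  match val k with 0 | 1 | 2 => o0 | 3 | 4 => o1 | _ => o2 end.
Definition pj (k : 'I_6) : 'I_4 :=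
  match val k with 0 => o1 | 1 | 3 => o2 | _ => o3 end.

Definition Lk (R : realType) (d : nat) (c : vfield R d) (k : 'I_6) : {mpoly CC R [4]} :=
  'X_(pj k) * Defs.pcomp c (pI k) - 'X_(pI k) * Defs.pcomp c (pj k).

Definition uvec (R : realType) (A : 'M[CC R]_4) : 'rV[CC R]_6 :=
  \row_k A (pI k) (pj k).

Definition amf (R : realType) (u : 'rV[CC R]_6) (i j : nat) : CC R :=
  match i, j with
  | 0, 1 => u 0 q0 | 1, 0 => - u 0 q0
  | 0, 2 => u 0 q1 | 2, 0 => - u 0 q1
  | 0, 3 => u 0 q2 | 3, 0 => - u 0 q2
  | 1, 2 => u 0 q3 | 2, 1 => - u 0 q3
  | 1, 3 => u 0 q4 | 3, 1 => - u 0 q4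
  | 2, 3 => u 0 q5 | 3, 2 => - u 0 q5
  | _, _ => 0 end.

Definition Amat (R : realType) (u : 'rV[CC R]_6) : 'M[CC R]_4 :=
  \matrix_(i, j) amf u i j.

Definition Pf (R : realType) (u : 'rV[CC R]_6) : CC R :=
  u 0 q0 * u 0 q5 - u 0 q1 * u 0 q4 + u 0 q2 * u 0 q3.

Lemma antisym_entry (R : realType) (A : 'M[CC R]_4) i j :
  antisym A -> A j i = - A i j.
Proof. by move=> h; have := congr1 (fun M : 'M[CC R]_4 => M i j) (h : A^T = - A); rewrite !mxE. Qed.

Lemma antisym_diag (R : realType) (A : 'M[CC R]_4) i :
  antisym A -> A i i = 0.
Proof.
move=> h; have e := antisym_entry i i h.
have : (2%:R : CC R) * A i i = 0 by rewrite mulr2n mulrDl mul1r {1}e addNr.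
by move/eqP; rewrite mulf_eq0 pnatr_eq0 /= => /eqP.
Qed.

Lemma Amat_antisym (R : realType) (u : 'rV[CC R]_6) : antisym (Amat u).
Proof.
apply/matrixP => i j; rewrite !mxE.
by case: (ord4P i) => ->; case: (ord4P j) => ->; rewrite /= ?opprK ?oppr0.
Qed.

Lemma uvecK (R : realType) (u : 'rV[CC R]_6) : uvec (Amat u) = u.
Proof.
apply/matrixP => i k; rewrite !mxE (ord1 i).
by case: (ord6P k) => [|[|[|[|[|]]]]] ->.
Qed.

Lemma AmatK (R : realType) (A : 'M[CC R]_4) : antisym A -> Amat (uvec A) = A.
Proof.
move=> h; apply/matrixP => i j; rewrite !mxE.
case: (ord4P i) => ->; case: (ord4P j) => -> /=; rewrite ?mxE /= ?antisym_diag //;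
  by rewrite (antisym_entry _ _ h) ?opprK.
Qed.

Lemma AmatZ (R : realType) (a : CC R) (u : 'rV[CC R]_6) : Amat (a *: u) = a *: Amat u.
Proof.
apply/matrixP => i j; rewrite !mxE.
by case: (ord4P i) => ->; case: (ord4P j) => -> /=; rewrite ?mxE ?mulrN ?mulr0.
Qed.

Lemma contractE (R : realType) (d : nat) (A : 'M[CC R]_4) (c : vfield R d) :
  antisym A -> contract A c = \sum_k uvec A 0 k *: Lk c k.
Proof.
move=> h; rewrite /contract sum4 /dcoef !sum4 sum6 !mxE /Lk /=.
rewrite (antisym_entry o0 o1 h) (antisym_entry o0 o2 h) (antisym_entry o0 o3 h).
rewrite (antisym_entry o1 o2 h) (antisym_entry o1 o3 h) (antisym_entry o2 o3 h).
rewrite !antisym_diag //.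
rewrite -!mul_mpolyC !mpolyCN.
ring.
Qed.


Definition dualu (R : realType) (u : 'rV[CC R]_6) : 'rV[CC R]_6 :=
  \row_k (match val k with 0 => u 0 q5 | 1 => - u 0 q4 | 2 => u 0 q3
                      | 3 => u 0 q2 | 4 => - u 0 q1 | _ => u 0 q0 end).

Lemma Amat_dual (R : realType) (u : 'rV[CC R]_6) :
  Amat u *m Amat (dualu u) = (- Pf u)%:M.
Proof.
apply/matrixP => i j; rewrite !mxE sum4 /Pf /dualu.
by case: (ord4P i) => ->; case: (ord4P j) => -> /=; rewrite !mxE /= ?mxE /= ?mulr1n ?mulr0n; ring.
Qed.

Lemma Amat_rank (R : realType) (u : 'rV[CC R]_6) : Pf u != 0 -> \rank (Amat u) = 4%N.
Proof.
move=> h; apply: mxrank_unit.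
have e : Amat u *m ((- Pf u)^-1 *: Amat (dualu u)) = 1%:M.
  by rewrite -scalemxAr Amat_dual scale_scalar_mx mulVf // oppr_eq0.
by case: (mulmx1_unit e).
Qed.

Lemma contact_neq0 (R : realType) (A : 'M[CC R]_4) : contact A -> uvec A != 0.
Proof.
case=> h r; apply/eqP => e; move: r; rewrite -(AmatK h) e.
have -> : Amat (0 : 'rV[CC R]_6) = 0.
  by apply/matrixP => i j; rewrite !mxE; case: (ord4P i) => ->; case: (ord4P j) => -> /=; rewrite ?mxE ?oppr0.
by rewrite mxrank0.
Qed.


Definition rowc (R : realType) (d : nat) (c : vfield R d) (mu : 'X_{1..4}) : 'rV[CC R]_6 :=
  \row_k (Lk c k)@_mu.

Definition Ms (R : realType) (d : nat) (ms : 'I_6 -> 'X_{1..4}) (s : 'rV[CC R]_6)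
  (c : vfield R d) : 'M[CC R]_6 :=
  \matrix_(i, j) if j == ord0 then s 0 i else rowc c (ms j) 0 i.

Definition acof (R : realType) (d : nat) (ms : 'I_6 -> 'X_{1..4}) (c : vfield R d)
  : 'rV[CC R]_6 := \row_i cofactor (Ms ms 0 c) i ord0.

Lemma rowc_dot (R : realType) (d : nat) (c : vfield R d) mu (u : 'rV[CC R]_6) :
  \sum_i u 0 i * rowc c mu 0 i = (\sum_k u 0 k *: Lk c k)@_mu.
Proof.
rewrite raddf_sum; apply: eq_bigr => k _; rewrite /rowc mxE.
by rewrite -mcoeffZ.
Qed.

Lemma detMs (R : realType) (d : nat) ms (s : 'rV[CC R]_6) (c : vfield R d) :
  \det (Ms ms s c) = \sum_i s 0 i * acof ms c 0 i.
Proof.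
rewrite (expand_det_col _ ord0); apply: eq_bigr => i _.
rewrite !mxE eqxx; congr (_ * _); rewrite /cofactor; congr (_ * \det _).
apply/matrixP => a b; rewrite !mxE.
by have /negbTE -> : lift ord0 b != ord0 by rewrite eq_sym neq_lift.
Qed.

Lemma ispoly_Lk (R : realType) (d : nat) k mu :
  ispoly (fun c : vfield R d => (Lk c k)@_mu).
Proof.
have h : forall (i j : 'I_4), ispoly (fun c : vfield R d => ('X_j * Defs.pcomp c i)@_mu).
  move=> i j.
  have hs := @ispoly_sum R d _ (index_enum (mon d)) predT
     (fun (m : mon d) (c : vfield R d) => c (i, m) * ('X_j * 'X_[val (val m)] : {mpoly CC R [4]})@_mu).
  apply: (ispoly_ext _ (hs _)).
    move=> c; rewrite /Defs.pcomp mulr_sumr raddf_sum; apply: eq_bigr => m _.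
    by rewrite -scalerAr -mcoeffZ.
  by move=> m; apply: ispolyM; [apply: ispolyV | apply: ispolyC].
apply: (ispoly_ext _ (ispolyB (h (pI k) (pj k)) (h (pj k) (pI k)))).
by move=> c; rewrite /Lk mcoeffB.
Qed.

Lemma ispoly_Ms (R : realType) (d : nat) ms (S : vfield R d -> 'rV[CC R]_6) :
  (forall i, ispoly (fun c => S c 0 i)) ->
  forall i j, ispoly (fun c => Ms ms (S c) c i j).
Proof.
move=> hS i j; case: (eqVneq j ord0) => [->|hj].
  by apply: (ispoly_ext _ (hS i)) => c; rewrite /Ms mxE eqxx.
by apply: (ispoly_ext _ (@ispoly_Lk R d i (ms j))) => c; rewrite /Ms /rowc !mxE (negbTE hj).
Qed.

Lemma ispoly_acof (R : realType) (d : nat) ms i :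
  ispoly (fun c : vfield R d => acof ms c 0 i).
Proof.
apply: (ispoly_ext _ (ispolyM (ispolyC _ ((-1) ^+ (i + @ord0 5)))
          (@ispoly_det R d _ (fun c : vfield R d => row' i (col' ord0 (Ms ms 0 c))) _))).
  by move=> c; rewrite /acof mxE.
move=> a b; apply: (ispoly_ext _ (@ispoly_Ms R d ms (fun _ => 0) _ _ _)).
- by move=> c; rewrite !mxE.
- by move=> k; apply: (ispoly_ext _ (ispolyC _ 0)) => c; rewrite mxE.
Qed.

Lemma leg_det (R : realType) (d : nat) ms (c : vfield R d) nu :
  legendrian_pt c -> \det (Ms ms (rowc c nu) c) = 0.
Proof.
case=> A [hc ht]; apply/eqP/det0P; exists (uvec A); first exact: contact_neq0.
have hA := hc.1.
have key : forall mu, \sum_k uvec A 0 k * rowc c mu 0 k = 0.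
  by move=> mu; rewrite rowc_dot -contractE // ht mcoeff0.
apply/matrixP => i j; rewrite !mxE.
case: (eqVneq j ord0) => [->|hj].
  rewrite -[RHS](key nu); apply: eq_bigr => k _; by rewrite !mxE eqxx.
rewrite -[RHS](key (ms j)); apply: eq_bigr => k _; by rewrite !mxE (negbTE hj).
Qed.

Lemma Lcone_det (R : realType) (d : nat) ms (c : vfield R d) nu :
  Lcone c -> \det (Ms ms (rowc c nu) c) = 0.
Proof.
move=> hL.
have [g hg] := ispoly_det (@ispoly_Ms R d ms (fun c => rowc c nu)
                 (fun i => ispoly_ext (fun c => esym (mxE _ _ _ _)) (@ispoly_Lk R d i nu))).
rewrite -hg; apply: hL => c' hc'; rewrite hg; exact: leg_det.
Qed.

Lemma Lcone_tangent (R : realType) (d : nat) ms (c : vfield R d) :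
  Lcone c -> \sum_k acof ms c 0 k *: Lk c k = 0.
Proof.
move=> hL; apply/mpolyP => nu; rewrite mcoeff0 -rowc_dot.
rewrite -[RHS](Lcone_det ms nu hL) detMs; apply: eq_bigr => i _; exact: mulrC.
Qed.


Lemma lin_comb (K : comRingType) (u a : 'rV[K]_6) (l : K) (X : 'I_6 -> K) :
  \sum_k (u - l *: a) 0 k * X k = \sum_k u 0 k * X k - l * \sum_k a 0 k * X k.
Proof.
rewrite mulr_sumr -sumrB; apply: eq_bigr => k _; rewrite !mxE; ring.
Qed.

Lemma sum_delta (K : comRingType) (a : 'rV[K]_6) i0 :
  \sum_k (delta_mx 0 i0 : 'rV[K]_6) 0 k * a 0 k = a 0 i0.
Proof.
rewrite (bigD1 i0) //= big1 ?addr0 => [|i hi]; rewrite !mxE eqxx /=.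
  by rewrite eqxx mul1r.
by rewrite (negbTE hi) mul0r.
Qed.

Lemma sum_delta' (K : comRingType) (a : 'rV[K]_6) i0 :
  \sum_k a 0 k * (delta_mx 0 i0 : 'rV[K]_6) 0 k = a 0 i0.
Proof. by rewrite -[RHS](sum_delta a i0); apply: eq_bigr => k _; rewrite mulrC. Qed.

Lemma mulMs (R : realType) (d : nat) ms (s u : 'rV[CC R]_6) (c : vfield R d) j :
  (u *m Ms ms s c) 0 j = if j == ord0 then \sum_k u 0 k * s 0 k
                         else \sum_k u 0 k * rowc c (ms j) 0 k.
Proof.
rewrite mxE; case: eqP => [->|/eqP hj]; apply: eq_bigr => k _;
  by rewrite /Ms mxE ?eqxx ?(negbTE hj).
Qed.

Lemma kernel_unique (R : realType) (d : nat) ms (c : vfield R d) (u : 'rV[CC R]_6) :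
  Lcone c -> acof ms c != 0 ->
  (forall j, j != ord0 -> (\sum_k u 0 k *: Lk c k)@_(ms j) = 0) ->
  exists lam, u = lam *: acof ms c.
Proof.
move=> hL ha hu; set a := acof ms c.
have [i0 hi0] : exists i0, a 0 i0 != 0.
  case: (pickP (fun i => a 0 i != 0)) => [i0 hi0|h0]; first by exists i0.
  case/eqP: ha; apply/matrixP => x y; rewrite (ord1 x) [RHS]mxE.
  by move: (h0 y) => /= /negbFE /eqP.
have ker_a : forall mu, \sum_k a 0 k * rowc c mu 0 k = 0.
  by move=> mu; rewrite rowc_dot Lcone_tangent // mcoeff0.
have ker_u : forall j, j != ord0 -> \sum_k u 0 k * rowc c (ms j) 0 k = 0.
  by move=> j hj; rewrite rowc_dot hu.
exists (u 0 i0 / a 0 i0); apply/eqP; rewrite -subr_eq0; apply/eqP.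
case: (eqVneq (u - (u 0 i0 / a 0 i0) *: a) 0) => // hw.
have : \det (Ms ms (delta_mx 0 i0) c) == 0.
  apply/det0P; exists (u - (u 0 i0 / a 0 i0) *: a) => //.
  apply/matrixP => x j; rewrite (ord1 x) mulMs [RHS]mxE.
  case: eqP => [_|/eqP hj].
    by rewrite lin_comb !sum_delta' divfK // subrr.
  by rewrite lin_comb ker_u // ker_a mulr0 subrr.
by rewrite detMs sum_delta (negbTE hi0).
Qed.

Lemma Pf_neq0 (R : realType) (u : 'rV[CC R]_6) : Pf u != 0 -> u != 0.
Proof. by apply: contraNneq => ->; rewrite /Pf !mxE !mul0r subrr addr0. Qed.

Lemma exist_part (R : realType) (d : nat) ms (c : vfield R d) :
  Lcone c -> Pf (acof ms c) != 0 -> exists A, contact A /\ tangent A c.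
Proof.
move=> hL hP; exists (Amat (acof ms c)); split.
  by split; [apply: Amat_antisym | apply: Amat_rank].
rewrite /tangent contractE; last exact: Amat_antisym.
rewrite (uvecK (acof ms c)); exact: Lcone_tangent.
Qed.

Lemma uniq_part (R : realType) (d : nat) ms (c : vfield R d) (A B : 'M[CC R]_4) :
  Lcone c -> Pf (acof ms c) != 0 -> contact A -> contact B ->
  tangent A c -> tangent B c -> exists lambda : CC R, lambda != 0 /\ B = lambda *: A.
Proof.
move=> hL hP hA hB tA tB.
have ha := Pf_neq0 hP.
have hk : forall X, contact X -> tangent X c ->
    exists l, l != 0 /\ uvec X = l *: acof ms c.
  move=> X hX tX.
  have hX0 : forall j, j != ord0 -> (\sum_k uvec X 0 k *: Lk c k)@_(ms j) = 0.
    by move=> j _; rewrite -contractE; [rewrite tX mcoeff0 | exact: hX.1].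
  have [l hl] := kernel_unique hL ha hX0.
  exists l; split => //; apply: contraTneq (contact_neq0 hX) => l0.
  by rewrite hl l0 scale0r eqxx.
have [lA [lA0 eA]] := hk A hA tA.
have [lB [lB0 eB]] := hk B hB tB.
exists (lB / lA); split; first by rewrite mulf_neq0 ?invr_eq0.
rewrite -(AmatK hA.1) -(AmatK hB.1) eA eB !AmatZ scalerA divfK //.
Qed.


Definition mk (a b c e : nat) : 'X_{1..4} :=
  (U_(o0) *+ a + U_(o1) *+ b + U_(o2) *+ c + U_(o3) *+ e)%MM.

Lemma mk0 a b c e : mk a b c e o0 = a.
Proof. rewrite /mk !mnmDE !mulmnE !mnm1E /=; lia. Qed.
Lemma mk1 a b c e : mk a b c e o1 = b.
Proof. rewrite /mk !mnmDE !mulmnE !mnm1E /=; lia. Qed.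
Lemma mk2 a b c e : mk a b c e o2 = c.
Proof. rewrite /mk !mnmDE !mulmnE !mnm1E /=; lia. Qed.
Lemma mk3 a b c e : mk a b c e o3 = e.
Proof. rewrite /mk !mnmDE !mulmnE !mnm1E /=; lia. Qed.

Lemma mk_eq a b c e a' b' c' e' :
  (mk a b c e == mk a' b' c' e') = [&& a == a', b == b', c == c' & e == e'].
Proof.
apply/eqP/and4P => [h|[/eqP-> /eqP-> /eqP-> /eqP->] //].
by split; apply/eqP; [move: (congr1 (fun m : 'X_{1..4} => m o0) h); rewrite !mk0
  | move: (congr1 (fun m : 'X_{1..4} => m o1) h); rewrite !mk1
  | move: (congr1 (fun m : 'X_{1..4} => m o2) h); rewrite !mk2
  | move: (congr1 (fun m : 'X_{1..4} => m o3) h); rewrite !mk3].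
Qed.

Lemma mkP (m : 'X_{1..4}) : m = mk (m o0) (m o1) (m o2) (m o3).
Proof. by apply/mnmP => i; case: (ord4P i) => ->; rewrite ?mk0 ?mk1 ?mk2 ?mk3. Qed.

Lemma mk_U0 a b c e : (U_(o0) + mk a b c e)%MM = mk a.+1 b c e.
Proof. by rewrite [LHS]mkP mnmDE !mnm1E mnmDE !mnm1E mnmDE !mnm1E mnmDE !mnm1E ?mk0 ?mk1 ?mk2 ?mk3. Qed.
Lemma mk_U1 a b c e : (U_(o1) + mk a b c e)%MM = mk a b.+1 c e.
Proof. by rewrite [LHS]mkP mnmDE !mnm1E mnmDE !mnm1E mnmDE !mnm1E mnmDE !mnm1E ?mk0 ?mk1 ?mk2 ?mk3. Qed.
Lemma mk_U2 a b c e : (U_(o2) + mk a b c e)%MM = mk a b c.+1 e.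
Proof. by rewrite [LHS]mkP mnmDE !mnm1E mnmDE !mnm1E mnmDE !mnm1E mnmDE !mnm1E ?mk0 ?mk1 ?mk2 ?mk3. Qed.
Lemma mk_U3 a b c e : (U_(o3) + mk a b c e)%MM = mk a b c e.+1.
Proof. by rewrite [LHS]mkP mnmDE !mnm1E mnmDE !mnm1E mnmDE !mnm1E mnmDE !mnm1E ?mk0 ?mk1 ?mk2 ?mk3. Qed.

Lemma mdeg_mk a b c e : mdeg (mk a b c e) = (a + b + c + e)%N.
Proof. by rewrite /mk !mdegD !mdegMn !mdeg1 !mul1n. Qed.

Lemma mkX (R : realType) a b c e :
  ('X_[mk a b c e] : {mpoly CC R [4]}) = 'X_o0 ^+ a * 'X_o1 ^+ b * 'X_o2 ^+ c * 'X_o3 ^+ e.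
Proof. by rewrite /mk !mpolyXD !mpolyXn. Qed.

Definition Mw (n : nat) (i : 'I_4) : 'X_{1..4} :=
  match val i with
  | 0 => mk n.+1 0 0 1 | 1 => mk 0 0 n.+2 0 | 2 => mk n.+1 1 0 0 | _ => mk 1 0 n.+1 0 end.

Definition sg (R : realType) (i : 'I_4) : CC R :=
  match val i with 0 | 1 => 1 | _ => -1 end.

Definition c0 (R : realType) (n : nat) : vfield R n.+2 :=
  fun J => if val (val J.2) == Mw n J.1 then @sg R J.1 else 0.

Lemma exist_mon n (m : 'X_{1..4}) : mdeg m = n.+2 -> exists mi : mon n.+2, val (val mi) = m.
Proof.
move=> h; have h1 : (mdeg m < n.+3)%N by rewrite h.
by exists (exist _ (BMultinom h1) (introT eqP h)).
Qed.

Lemma mdeg_Mw n i : mdeg (Mw n i) = n.+2.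
Proof. by case: (ord4P i) => ->; rewrite /Mw /= mdeg_mk; lia. Qed.

Lemma pcomp_c0 (R : realType) n i : Defs.pcomp (@c0 R n) i = @sg R i *: 'X_[Mw n i].
Proof.
have [mi hmi] := exist_mon (mdeg_Mw n i).
rewrite /Defs.pcomp (bigD1 mi) //= big1 ?addr0.
  by rewrite /c0 /= hmi eqxx.
move=> m hm; rewrite /c0 /=; case: eqP => [e|]; last by rewrite scale0r.
by case/eqP: hm; apply: val_inj; apply: val_inj; exact: (etrans e (esym hmi)).
Qed.

Lemma Lk_c0 (R : realType) n k mu :
  (Lk (@c0 R n) k)@_mu = @sg R (pI k) * (U_(pj k) + Mw n (pI k) == mu)%MM%:R
                      - @sg R (pj k) * (U_(pI k) + Mw n (pj k) == mu)%MM%:R.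
Proof.
by rewrite /Lk !pcomp_c0 -!scalerAr mcoeffB !mcoeffZ -!mpolyXD !mcoeffX.
Qed.

Definition msel (n : nat) (j : 'I_6) : 'X_{1..4} :=
  match val j with
  | 1 => mk n.+1 0 1 1 | 2 => mk n.+1 0 0 2 | 3 => mk n.+1 2 0 0
  | 4 => mk 0 0 n.+2 1 | 5 => mk n.+1 1 0 1 | _ => 0%MM end.

Definition Wr (R : realType) (j : 'I_6) : 'rV[CC R]_6 :=
  match val j with
  | 5 => delta_mx 0 q0 - delta_mx 0 q5 | _ => delta_mx 0 j end.

Ltac decb := repeat match goal with
   | |- context [ GRing.natmul _ (nat_of_bool ?b) ] =>
      lazymatch b with
      | true => fail | false => fail
      | _ => first [ rewrite (_ : b = false); last by lia
                   | rewrite (_ : b = true); last by lia ] end end.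

Lemma rowc_c0 (R : realType) n j : j != ord0 -> rowc (@c0 R n) (msel n j) = @Wr R j.
Proof.
move=> hj; apply/matrixP => x k; rewrite (ord1 x) /rowc !mxE Lk_c0.
case: (ord6P j) hj => [-> //|[|[|[|[|]]]]] -> _;
  case: (ord6P k) => [|[|[|[|[|]]]]] ->;
  rewrite /= ?mk_U0 ?mk_U1 ?mk_U2 ?mk_U3 !mk_eq; decb; rewrite /Wr /sg /pI /pj /= ?mxE /=; ring.
Qed.

Lemma acof_row (R : realType) (d : nat) ms (c : vfield R d) j :
  j != ord0 -> \sum_k rowc c (ms j) 0 k * acof ms c 0 k = 0.
Proof.
move=> hj; rewrite -detMs -det_tr.
apply: (@determinant_alternate _ _ _ ord0 j); first by rewrite eq_sym.
by move=> k; rewrite !mxE /Ms ?mxE eqxx; case: ifP.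
Qed.

Lemma prod6 (K : comRingType) (F : 'I_6 -> K) :
  \prod_(i < 6) F i = F q0 * F q1 * F q2 * F q3 * F q4 * F q5.
Proof.
rewrite !big_ord_recl big_ord0 mulr1 !mulrA.
by congr (_ * _ * _ * _ * _ * _); congr F; apply: val_inj.
Qed.

Lemma trE (K : Type) (A : 'M[K]_6) i j : A^T i j = A j i.
Proof. by rewrite mxE. Qed.

Lemma Ms_c0 (R : realType) n s i j : j != ord0 -> Ms (msel n) s (@c0 R n) i j = @Wr R j 0 i.
Proof. by move=> hj; rewrite -(@rowc_c0 R n j hj) /Ms mxE (negbTE hj). Qed.

Lemma Ms0 (R : realType) (d : nat) ms (s : 'rV[CC R]_6) (c : vfield R d) i :
  Ms ms s c i ord0 = s 0 i.
Proof. by rewrite /Ms mxE eqxx. Qed.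

Lemma Ms0q (R : realType) (d : nat) ms (s : 'rV[CC R]_6) (c : vfield R d) i :
  Ms ms s c i q0 = s 0 i.
Proof. by rewrite /Ms mxE. Qed.

Lemma acof_c0 (R : realType) n :
  let a := acof (msel n) (@c0 R n) in
  [/\ a 0 q1 = 0, a 0 q2 = 0, a 0 q3 = 0, a 0 q4 = 0 & a 0 q5 = a 0 q0] /\ a 0 q0 = -1.
Proof.
move=> a.
have hr : forall j, j != ord0 -> \sum_k @Wr R j 0 k * a 0 k = 0.
  by move=> j hj; rewrite -(@rowc_c0 R n j hj); exact: acof_row.
split; first split.
- by rewrite -(hr q1 isT) /Wr /= sum_delta.
- by rewrite -(hr q2 isT) /Wr /= sum_delta.
- by rewrite -(hr q3 isT) /Wr /= sum_delta.
- by rewrite -(hr q4 isT) /Wr /= sum_delta.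
- apply/eqP; rewrite eq_sym -subr_eq0; apply/eqP; rewrite -(hr q5 isT) /Wr /=.
  rewrite -(sum_delta a q0) -(sum_delta a q5) -sumrB; apply: eq_bigr => k _.
  by rewrite !mxE mulrBl.
rewrite -(sum_delta a q0) -detMs -det_tr det_trig.
  rewrite prod6 !trE.
  have -> : q0 = ord0 by apply: val_inj.
  rewrite Ms0 !Ms_c0 // /Wr /= !mxE /=; ring.
apply/is_trig_mxP => i j; rewrite trE.
case: (ord6P i) => [|[|[|[|[|]]]]] ->; case: (ord6P j) => [|[|[|[|[|]]]]] -> //= _;
  rewrite ?Ms0q ?Ms_c0 // /Wr /= ?mxE //=.
Qed.

Lemma ispoly_Pf (R : realType) (d : nat) ms :
  ispoly (fun c : vfield R d => Pf (acof ms c)).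
Proof.
rewrite /Pf.
apply: ispolyD; first apply: ispolyB; apply: ispolyM; exact: ispoly_acof.
Qed.

Definition u0 (R : realType) : 'rV[CC R]_6 := delta_mx 0 q0 + delta_mx 0 q5.

Lemma Pf_u0 (R : realType) : Pf (@u0 R) = 1.
Proof. by rewrite /Pf /u0 !mxE /=; ring. Qed.

Lemma c0_leg (R : realType) n : legendrian_pt (@c0 R n).
Proof.
exists (Amat (@u0 R)); split.
  split; first exact: Amat_antisym.
  by apply: Amat_rank; rewrite Pf_u0 oner_eq0.
rewrite /tangent contractE; last exact: Amat_antisym.
have e : forall k, @u0 R 0 k = if (val k == 0%N) || (val k == 5%N) then 1 else 0.
  by move=> k; rewrite /u0 !mxE; case: (ord6P k) => [|[|[|[|[|]]]]] ->; rewrite /= ?addr0 ?add0r.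
rewrite (uvecK (@u0 R)) sum6 !e.
rewrite [in X in X = _]/= !scale0r ?addr0 ?add0r !scale1r.
rewrite /Lk !pcomp_c0.
have -> : pI q0 = o0 by []. have -> : pj q0 = o1 by [].
have -> : pI q5 = o2 by []. have -> : pj q5 = o3 by [].
have -> : @sg R o0 = 1 by []. have -> : @sg R o1 = 1 by [].
have -> : @sg R o2 = -1 by []. have -> : @sg R o3 = -1 by [].
have -> : Mw n o0 = mk n.+1 0 0 1 by []. have -> : Mw n o1 = mk 0 0 n.+2 0 by [].
have -> : Mw n o2 = mk n.+1 1 0 0 by []. have -> : Mw n o3 = mk 1 0 n.+1 0 by [].
rewrite !mkX !scale1r !scaleN1r !exprS.
ring.
Qed.

Lemma c0_Lcone (R : realType) n : Lcone (@c0 R n).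
Proof. by move=> f hf; apply: hf; exact: c0_leg. Qed.

Lemma c0_nonradial (R : realType) n : ~ radial (@c0 R n).
Proof.
case=> g [_ hg].
have h1 : rowc (@c0 R n) (msel n q5) 0 q0 = 1.
  by rewrite (@rowc_c0 R n q5 isT) /Wr /= !mxE /=; ring.
have h2 : Lk (@c0 R n) q0 = 0.
  by rewrite /Lk /= !hg; ring.
by move: h1; rewrite /rowc mxE h2 mcoeff0 => /eqP; rewrite eq_sym oner_eq0.
Qed.

Lemma c0_Pf (R : realType) n : Pf (acof (msel n) (@c0 R n)) = 1.
Proof.
have [[h1 h2 h3 h4 h5] h0] := acof_c0 R n.
by rewrite /Pf h1 h2 h3 h4 h5 h0; ring.
Qed.

Theorem proposition7p4 (R : realType) (d : nat) (hd : (1 < d)%N) :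
  exists f : {mpoly CC R [#|{: Jd d}|]},
    (exists c : vfield R d, Lcone c /\ ~ radial c /\ peval f c <> 0) /\
    (forall c : vfield R d, Lcone c -> ~ radial c -> peval f c <> 0 ->
       (exists A, contact A /\ tangent A c) /\
       (forall A B : 'M[CC R]_4, contact A -> contact B ->
          tangent A c -> tangent B c ->
          exists lambda : CC R, lambda != 0 /\ B = lambda *: A)).
Proof.
case: d hd => [|[|n]] // _.
have [f hf] := @ispoly_Pf R n.+2 (msel n).
exists f; split.
  exists (@c0 R n); split; first exact: c0_Lcone.
  split; first exact: c0_nonradial.
  by rewrite hf c0_Pf; apply/eqP; rewrite oner_eq0.
move=> c hL _ hf0.
have hP : Pf (acof (msel n) c) != 0 by rewrite -hf; apply/eqP.
split; first exact: (exist_part hL hP).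
by move=> A B hA hB tA tB; exact: (uniq_part hL hP hA hB tA tB).
Qed.
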